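(* Let $k\ge 0$. For all finite structures $\mathcal A_1,\mathcal A_2,\mathcal B_1,\mathcal B_2$ over the same vocabulary, if $\mathrm{Th}^k_{\mathrm{inv}(\mathrm{FO}+<)}(\mathcal A_1)=\mathrm{Th}^k_{\mathrm{inv}(\mathrm{FO}+<)}(\mathcal A_2)$ and $\mathrm{Th}^k_{\mathrm{inv}(\mathrm{FO}+<)}(\mathcal B_1)=\mathrm{Th}^k_{\mathrm{inv}(\mathrm{FO}+<)}(\mathcal B_2)$, then $\mathrm{Th}^k_{\mathrm{inv}(\mathrm{FO}+<)}(\mathcal A_1\sqcup\mathcal B_1)=\mathrm{Th}^k_{\mathrm{inv}(\mathrm{FO}+<)}(\mathcal A_2\sqcup\mathcal B_2)$ and $\mathrm{Th}^k_{\mathrm{inv}(\mathrm{FO}+<)}(\mathcal A_1\times\mathcal B_1)=\mathrm{Th}^k_{\mathrm{inv}(\mathrm{FO}+<)}(\mathcal A_2\times\mathcal B_2)$. That is, the rank-$k$ $<$-invariant FO theories of $\mathcal A\sqcup\mathcal B$ and of $\mathcal A\times\mathcal B$ are uniquely determined by those of $\mathcal A$ and $\mathcal B$.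
   Context: All structures are finite. An FO sentence $\varphi$ over a vocabulary $\tau$ extended with a fresh binary symbol $<$ is $<$-invariant if for every finite $\tau$-structure $\mathcal M$ and any two linear orders $<_1,<_2$ on $\mathrm{dom}(\mathcal M)$, $(\mathcal M,<_1)\models\varphi$ iff $(\mathcal M,<_2)\models\varphi$; then $\varphi$ is true in $\mathcal M$ if $(\mathcal M,<)\models\varphi$ for some (equivalently every) linear order. $\mathrm{Th}^k_{\mathrm{inv}(\mathrm{FO}+<)}(\mathcal M)$ is the set of all $<$-invariant FO sentences of quantifier rank at most $k$ true in $\mathcal M$. $\mathcal A\times\mathcal B$ is the direct product (domain $\mathrm{dom}(\mathcal A)\times\mathrm{dom}(\mathcal B)$, each relation holding of a tuple of pairs iff it holds componentwise in $\mathcal A$ and in $\mathcal B$). $\mathcal A\sqcup\mathcal B$ is the disjoint union, with the vocabulary augmented by two unary predicates naming the universes of $\mathcal A$ and of $\mathcal B$. *)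

(* Defs.v *)
From HB Require Import structures.
From mathcomp Require Import all_boot.
Set Warnings "-notation-overridden".
Set Implicit Arguments.
Unset Strict Implicit.
Unset Printing Implicit Defensive.

Record vocab := Vocab { vsym : finType; varity : vsym -> nat }.

Record struc (V : vocab) := Struc {
  dom : finType;
  dom_pt : dom;
  interp : forall s : vsym V, {ffun 'I_(varity s) -> dom} -> bool
}.
Arguments interp {V} s0 s : rename.
Arguments dom {V} s : rename.
Arguments dom_pt {V} s : rename.

(* FO formulas over V extended with a fresh binary symbol <  (FLt).
   Formulas are well-scoped de Bruijn: [form V n] has free variables in 'I_n. *)
Inductive form (V : vocab) : nat -> Type :=
| FFalse n : form V n
| FEq n (i j : 'I_n) : form V n
| FLt n (i j : 'I_n) : form V n
| FRel n (s : vsym V) (args : 'I_(varity s) -> 'I_n) : form V n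
| FNot n (f : form V n) : form V n
| FOr n (f g : form V n) : form V n
| FAnd n (f g : form V n) : form V n
| FEx n (f : form V n.+1) : form V n
| FAll n (f : form V n.+1) : form V n.

Arguments FFalse {V n}.

Fixpoint qrank V n (f : form V n) : nat :=
  match f with
  | FFalse _ | FEq _ _ _ | FLt _ _ _ | FRel _ _ _ => 0
  | FNot _ g => qrank g
  | FOr _ g h | FAnd _ g h => maxn (qrank g) (qrank h)
  | FEx _ g | FAll _ g => (qrank g).+1
  end.

Definition ext_env (T : Type) n (e : 'I_n -> T) (a : T) : 'I_n.+1 -> T :=
  fun i => match unlift ord0 i with Some j => e j | None => a end.

Fixpoint sat V (M : struc V) (lt : rel (dom M)) n (f : form V n)
    : ('I_n -> dom M) -> Prop :=
  match f in form _ n return ('I_n -> dom M) -> Prop with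
  | FFalse _ => fun _ => False
  | FEq _ i j => fun e => e i = e j
  | FLt _ i j => fun e => lt (e i) (e j)
  | FRel _ s args => fun e => interp M s [ffun k => e (args k)]
  | FNot _ g => fun e => ~ @sat V M lt _ g e
  | FOr _ g h => fun e => @sat V M lt _ g e \/ @sat V M lt _ h e
  | FAnd _ g h => fun e => @sat V M lt _ g e /\ @sat V M lt _ h e
  | FEx _ g => fun e => exists a, @sat V M lt _ g (ext_env e a)
  | FAll _ g => fun e => forall a, @sat V M lt _ g (ext_env e a)
  end.

Definition env0 (T : Type) (x : T) : 'I_0 -> T := fun _ => x.

Definition sentence V := form V 0.

Definition sat_sent V (M : struc V) (lt : rel (dom M)) (phi : sentence V) : Prop :=
  @sat V M lt 0 phi (env0 (dom_pt M)).

Definition linear_order (T : Type) (lt : rel T) : Prop :=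
  [/\ (forall x, ~~ lt x x),
      (forall x y z, lt x y -> lt y z -> lt x z) &
      (forall x y, x <> y -> lt x y \/ lt y x)].

Definition lt_invariant V (phi : sentence V) : Prop :=
  forall (M : struc V) (lt1 lt2 : rel (dom M)),
    linear_order lt1 -> linear_order lt2 ->
    (sat_sent lt1 phi <-> sat_sent lt2 phi).

(* truth of an invariant sentence: true under some (equivalently every) order *)
Definition inv_true V (M : struc V) (phi : sentence V) : Prop :=
  exists lt : rel (dom M), linear_order lt /\ sat_sent lt phi.

Definition Th_inv V (k : nat) (M : struc V) : sentence V -> Prop :=
  fun phi => [/\ qrank phi <= k, lt_invariant phi & inv_true M phi].

Definition same_Th V (k : nat) (M N : struc V) : Prop :=
  forall phi : sentence V, Th_inv k M phi <-> Th_inv k N phi.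

Definition prod_struc V (A B : struc V) : struc V :=
  @Struc V (dom A * dom B)%type (dom_pt A, dom_pt B)
    (fun s t => interp A s [ffun i => (t i).1] && interp B s [ffun i => (t i).2]).

(* vocabulary of a disjoint union: V plus two unary predicates
   (inr true names the universe of A, inr false the universe of B) *)
Definition union_vocab (V : vocab) : vocab :=
  @Vocab (vsym V + bool)%type
    (fun s => match s with inl s0 => varity s0 | inr _ => 1 end).

Definition union_interp V (A B : struc V) (s : vsym (union_vocab V))
    : {ffun 'I_(varity s) -> (dom A + dom B)%type} -> bool :=
  match s as s' return {ffun 'I_(@varity (union_vocab V) s') -> (dom A + dom B)%type} -> bool with
  | inl s0 => fun t =>
      [exists u : {ffun 'I_(varity s0) -> dom A},
          (t == [ffun i => inl (u i)]) && interp A s0 u]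
   || [exists u : {ffun 'I_(varity s0) -> dom B},
          (t == [ffun i => inr (u i)]) && interp B s0 u]
  | inr true => fun t =>
      [exists u : {ffun 'I_1 -> dom A}, t == [ffun i => inl (u i)]]
  | inr false => fun t =>
      [exists u : {ffun 'I_1 -> dom B}, t == [ffun i => inr (u i)]]
  end.

Definition dunion_struc V (A B : struc V) : struc (union_vocab V) :=
  @Struc (union_vocab V) (dom A + dom B)%type (inl (dom_pt A)) (@union_interp V A B).

(* Main.v *)
Require Import Defs.
From mathcomp Require Import all_boot.
Set Warnings "-notation-overridden".
Set Implicit Arguments. Unset Strict Implicit. Unset Printing Implicit Defensive.

Definition cst (V : vocab) m (b : bool) : form V m :=
  if b then FNot FFalse else FFalse.

Lemma sat_cst V (M : struc V) (lt : rel (dom M)) m (b : bool) e :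
  @sat V M lt m (cst V m b) e <-> b.
Proof. by case: b => /=; split => // _ []. Qed.

Lemma qrank_cst V m b : qrank (cst V m b) = 0.
Proof. by case: b. Qed.

Definition bigor V m (P : finType) (h : P -> form V m) : form V m :=
  foldr (fun p acc => FOr (h p) acc) FFalse (enum P).
Definition bigand V m (P : finType) (h : P -> form V m) : form V m :=
  foldr (fun p acc => FAnd (h p) acc) (cst V m true) (enum P).

Lemma sat_bigor V (M : struc V) (lt : rel (dom M)) m (P : finType) (h : P -> form V m) e :
  sat lt (bigor h) e <-> exists p, sat lt (h p) e.
Proof.
rewrite /bigor.
suff H : forall s, sat lt (foldr (fun p acc => FOr (h p) acc) FFalse s) e
   <-> exists p, p \in s /\ sat lt (h p) e.
  apply: iff_trans (H _) _; split=> -[p Hp]; exists p; [by case: Hp | by rewrite mem_enum].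
elim=> [|a s IH] /=; first by split=> // -[p []].
apply: iff_trans (or_iff_compat_l _ IH) _; split.
- case=> [Ha|[p [Hp Hs]]]; first by exists a; rewrite mem_head.
  by exists p; rewrite in_cons Hp orbT.
- case=> p []; rewrite in_cons => /orP [/eqP -> H|Hp H]; first by left.
  by right; exists p.
Qed.

Lemma sat_bigand V (M : struc V) (lt : rel (dom M)) m (P : finType) (h : P -> form V m) e :
  sat lt (bigand h) e <-> forall p, sat lt (h p) e.
Proof.
rewrite /bigand.
suff H : forall s, sat lt (foldr (fun p acc => FAnd (h p) acc) (cst V m true) s) e
   <-> forall p, p \in s -> sat lt (h p) e.
  by apply: iff_trans (H _) _; split=> Hp p; [apply: Hp; rewrite mem_enum | move=> _; apply: Hp].
elim=> [|a s IH] /=; first by split=> // _ p.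
apply: iff_trans (and_iff_compat_l _ IH) _; split.
- case=> Ha Hs p; rewrite in_cons => /orP [/eqP -> //|]; exact: Hs.
- move=> H; split; first by apply: H; rewrite mem_head.
  by move=> p Hp; apply: H; rewrite in_cons Hp orbT.
Qed.

Lemma qrank_bigor V m (P : finType) (h : P -> form V m) r :
  (forall p, qrank (h p) <= r) -> qrank (bigor h) <= r.
Proof. move=> H; rewrite /bigor; elim: (enum P) => //= a s IH; by rewrite geq_max H IH. Qed.

Lemma qrank_bigand V m (P : finType) (h : P -> form V m) r :
  (forall p, qrank (h p) <= r) -> qrank (bigand h) <= r.
Proof. move=> H; rewrite /bigand; elim: (enum P) => //= a s IH; by rewrite geq_max H IH. Qed.

Lemma ext_env_eq (T : Type) n (e1 e2 : 'I_n -> T) a :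
  (forall i, e1 i = e2 i) -> forall i, ext_env e1 a i = ext_env e2 a i.
Proof. by move=> H i; rewrite /ext_env; case: unlift. Qed.

Lemma sat_ext V (M : struc V) (lt : rel (dom M)) n (f : form V n) :
  forall e1 e2 : 'I_n -> dom M, (forall i, e1 i = e2 i) ->
  (sat lt f e1 <-> sat lt f e2).
Proof.
elim: f => {n} [n|n i j|n i j|n s args|n f IH|n f IH g IH'|n f IH g IH'|n f IH|n f IH]
  e1 e2 H /=.
- by [].
- by rewrite !H.
- by rewrite !H.
- have -> // : [ffun k => e1 (args k)] = [ffun k => e2 (args k)].
  by apply/ffunP=> k; rewrite !ffunE H.
- have := IH _ _ H; tauto.
- have := IH _ _ H; have := IH' _ _ H; tauto.
- have := IH _ _ H; have := IH' _ _ H; tauto.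
- split=> -[a Ha]; exists a;
    [exact: (IH _ _ (ext_env_eq a H)).1 | exact: (IH _ _ (ext_env_eq a H)).2].
- split=> Ha a;
    [exact: (IH _ _ (ext_env_eq a H)).1 | exact: (IH _ _ (ext_env_eq a H)).2].
Qed.

Lemma sat_ext_imp V (M : struc V) (lt : rel (dom M)) n (f : form V n)
  (e1 e2 : 'I_n -> dom M) : (forall i, e1 i = e2 i) -> sat lt f e1 -> sat lt f e2.
Proof. by move=> H; case: (sat_ext lt f H). Qed.

Definition shift (P : Type) n m (s : 'I_n -> P * 'I_m) : 'I_n -> P * 'I_m.+1 :=
  fun i => ((s i).1, lift ord0 (s i).2).

Fixpoint tr (W V : vocab) (P : finType)
  (tE tL : forall m, P -> P -> 'I_m -> 'I_m -> form V m)
  (tR : forall m (s : vsym W), ('I_(varity s) -> P * 'I_m) -> form V m)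
  n (f : form W n) {struct f} : forall m, ('I_n -> P * 'I_m) -> form V m :=
  match f in form _ n return forall m, ('I_n -> P * 'I_m) -> form V m with
  | FFalse _ => fun m _ => FFalse
  | FEq _ i j => fun m s => tE m (s i).1 (s j).1 (s i).2 (s j).2
  | FLt _ i j => fun m s => tL m (s i).1 (s j).1 (s i).2 (s j).2
  | FRel _ r args => fun m s => tR m r (fun k => s (args k))
  | FNot _ g => fun m s => FNot (tr tE tL tR g s)
  | FOr _ g h => fun m s => FOr (tr tE tL tR g s) (tr tE tL tR h s)
  | FAnd _ g h => fun m s => FAnd (tr tE tL tR g s) (tr tE tL tR h s)
  | FEx _ g => fun m s =>
      FEx (bigor (fun p => tr tE tL tR g (ext_env (shift s) (p, ord0))))
  | FAll _ g => fun m s =>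
      FAll (bigand (fun p => tr tE tL tR g (ext_env (shift s) (p, ord0))))
  end.

Lemma env_step (P : Type) (T U : Type) (g : P -> T -> U) n m (s : 'I_n -> P * 'I_m)
  (e : 'I_m -> T) p y (i : 'I_n.+1) :
  g (ext_env (shift s) (p, ord0) i).1 (ext_env e y (ext_env (shift s) (p, ord0) i).2)
  = ext_env (fun i => g (s i).1 (e (s i).2)) (g p y) i.
Proof.
rewrite /ext_env; case: (unliftP ord0 i) => [j _|_] /=.
- by rewrite /shift /= liftK.
- by rewrite unlift_none.
Qed.

Lemma tr_correct W V (P : finType) tE tL tR (M : struc V) (C : struc W)
  (lt : rel (dom M)) (ltC : rel (dom C)) (g : P -> dom M -> dom C)
  (Hg : forall c, exists p x, g p x = c)
  (HE : forall m p q i j e, sat lt (tE m p q i j) e <-> g p (e i) = g q (e j))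
  (HL : forall m p q i j e, sat lt (tL m p q i j) e <-> ltC (g p (e i)) (g q (e j)))
  (HR : forall m s t e, sat lt (tR m s t) e <->
        interp C s [ffun k => g (t k).1 (e (t k).2)]) :
  forall n (f : form W n) m (s : 'I_n -> P * 'I_m) e,
  sat lt (@tr W V P tE tL tR n f m s) e <-> sat ltC f (fun i => g (s i).1 (e (s i).2)).
Proof.
move=> n f.
elim: f => {n} [n|n i j|n i j|n r args|n f IH|n f IH h IH'|n f IH h IH'|n f IH|n f IH]
  m s e /=.
- by [].
- exact: HE.
- exact: HL.
- exact: HR.
- have := IH m s e; tauto.
- have := IH m s e; have := IH' m s e; tauto.
- have := IH m s e; have := IH' m s e; tauto.
- split.
  + case=> y /sat_bigor [p Hp]; exists (g p y).
    have := (IH _ _ (ext_env e y)).1 Hp.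
    by apply: sat_ext_imp => i; rewrite env_step.
  + case=> c; have [p [y <-]] := Hg c => Hc; exists y; apply/sat_bigor; exists p.
    apply/IH; move: Hc; apply: sat_ext_imp => i; by rewrite env_step.
- split.
  + move=> Ha c; have [p [y <-]] := Hg c.
    have /sat_bigand Hb := Ha y; have := (IH _ _ (ext_env e y)).1 (Hb p).
    by apply: sat_ext_imp => i; rewrite env_step.
  + move=> Hc y; apply/sat_bigand => p.
    apply/IH; move: (Hc (g p y)); apply: sat_ext_imp => i; by rewrite env_step.
Qed.

Lemma qrank_tr W V (P : finType) tE tL tR
  (HE : forall m p q i j, qrank (tE m p q i j) = 0)
  (HL : forall m p q i j, qrank (tL m p q i j) = 0)
  (HR : forall m s t, qrank (tR m s t) = 0) :
  forall n (f : form W n) m (s : 'I_n -> P * 'I_m),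
  qrank (@tr W V P tE tL tR n f m s) <= qrank f.
Proof.
move=> n f.
elim: f => {n} [n|n i j|n i j|n r args|n f IH|n f IH h IH'|n f IH h IH'|n f IH|n f IH]
  m s /=.
- by [].
- by rewrite HE.
- by rewrite HL.
- by rewrite HR.
- exact: IH.
- by rewrite geq_max !leq_max IH IH' orbT.
- by rewrite geq_max !leq_max IH IH' orbT.
- by rewrite ltnS; apply: qrank_bigor => p; apply: IH.
- by rewrite ltnS; apply: qrank_bigand => p; apply: IH.
Qed.

Definition ord_lt (T : finType) : rel T := fun x y => enum_rank x < enum_rank y.

Lemma ord_lt_linear (T : finType) : linear_order (@ord_lt T).
Proof.
split; rewrite /ord_lt.
- by move=> x; rewrite ltnn.
- by move=> x y z; apply: ltn_trans.
- move=> x y Hxy; case: (ltngtP (enum_rank x) (enum_rank y)); [left|right|] => //.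
  by move/val_inj/enum_rank_inj.
Qed.

Lemma transfer (V W : vocab) (P : finType) (p0 : P) (F : struc V -> struc W)
  (g : forall M, P -> dom M -> dom (F M))
  (L : forall M, rel (dom M) -> rel (dom (F M)))
  (tE tL : forall m, P -> P -> 'I_m -> 'I_m -> form V m)
  (tR : forall m (s : vsym W), ('I_(varity s) -> P * 'I_m) -> form V m)
  (Hg : forall M c, exists p x, g M p x = c)
  (HLin : forall M (lt : rel (dom M)), linear_order lt -> linear_order (L M lt))
  (HE : forall M (lt : rel (dom M)) m p q i j e,
     sat lt (tE m p q i j) e <-> g M p (e i) = g M q (e j))
  (HL : forall M (lt : rel (dom M)) m p q i j e,
     sat lt (tL m p q i j) e <-> L M lt (g M p (e i)) (g M q (e j)))
  (HR : forall M (lt : rel (dom M)) m s t e, sat lt (tR m s t) e <->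
        interp (F M) s [ffun k => g M (t k).1 (e (t k).2)])
  (HE0 : forall m p q i j, qrank (tE m p q i j) = 0)
  (HL0 : forall m p q i j, qrank (tL m p q i j) = 0)
  (HR0 : forall m s t, qrank (tR m s t) = 0)
  k M1 M2 : same_Th k M1 M2 -> same_Th k (F M1) (F M2).
Proof.
suff one : forall M1 M2, same_Th k M1 M2 ->
    forall phi, Th_inv k (F M1) phi -> Th_inv k (F M2) phi.
  move=> H phi; split; first exact: one.
  by apply: one => psi; split; move/(H psi).
move=> {}M1 {}M2 H phi [Hk Hinv [lt [Hlin Hsat]]].
pose psi := @tr W V P tE tL tR 0 phi 0 (fun i : 'I_0 => (p0, i)).
have Hcor : forall M (l : rel (dom M)), sat_sent l psi <-> sat_sent (L M l) phi.
  move=> M l; rewrite /sat_sent.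
  apply: iff_trans (tr_correct (Hg M) (HE M l) (HL M l) (HR M l) _ _ _) _.
  by apply: sat_ext => -[].
have Hpsi : Th_inv k M1 psi.
  split.
  - exact: leq_trans (qrank_tr HE0 HL0 HR0 _ _) Hk.
  - move=> M l1 l2 h1 h2.
    apply: iff_trans (Hcor M l1) _; apply: iff_trans _ (iff_sym (Hcor M l2)).
    exact: (Hinv _ _ _ (HLin _ _ h1) (HLin _ _ h2)).
  - exists (@ord_lt _); split; first exact: ord_lt_linear.
    apply: (Hcor M1 _).2; apply: (Hinv _ _ _ (HLin _ _ (ord_lt_linear _)) Hlin).2.
    exact: Hsat.
have [_ _ [lt2 [Hl2 Hs2]]] := (H psi).1 Hpsi.
split => //; exists (L M2 lt2); split; first exact: HLin.
exact: (Hcor M2 _).1.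
Qed.

Arguments cst : simpl never.

Definition sum_lt (A B : Type) (l1 : rel A) (l2 : rel B) : rel (A + B) :=
  fun x y => match x, y with
  | inl a, inl a' => l1 a a' | inl _, inr _ => true
  | inr _, inl _ => false | inr b, inr b' => l2 b b' end.

Lemma sum_lt_linear A B (l1 : rel A) (l2 : rel B) :
  linear_order l1 -> linear_order l2 -> linear_order (sum_lt l1 l2).
Proof.
move=> [i1 t1 c1] [i2 t2 c2]; split.
- by case.
- by move=> [x|x] [y|y] [z|z] //=; [apply: t1 | apply: t2].
- move=> [x|x] [y|y] //= H; [apply: c1 | by left | by right | apply: c2];
  by move=> E; apply: H; rewrite E.
Qed.

Definition lex (A B : eqType) (l1 : rel A) (l2 : rel B) : rel (A * B) :=
  fun x y => l1 x.1 y.1 || (x.1 == y.1) && l2 x.2 y.2.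

Lemma lex_linear (A B : eqType) (l1 : rel A) (l2 : rel B) :
  linear_order l1 -> linear_order l2 -> linear_order (lex l1 l2).
Proof.
move=> [i1 t1 c1] [i2 t2 c2]; split; rewrite /lex.
- by move=> x; rewrite (negbTE (i1 _)) (negbTE (i2 _)) andbF.
- move=> x y z /orP [H1|/andP [/eqP E1 H1]] /orP [H2|/andP [/eqP E2 H2]].
  + by rewrite (t1 _ _ _ H1 H2).
  + by rewrite -E2 H1.
  + by rewrite E1 H2.
  + by apply/orP; right; rewrite E1 E2 eqxx /=; exact: t2 H1 H2.
- move=> [x1 x2] [y1 y2] /= H.
  case: (eqVneq x1 y1) => [E|N].
  + have N2 : x2 <> y2 by move=> E2; apply: H; rewrite E E2.
    by rewrite E ?eqxx; case: (c2 _ _ N2) => ->; [left|right]; rewrite orbT.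
  + have N1 : x1 <> y1 by apply/eqP.
    by case: (c1 _ _ N1) => ->; [left|right].
Qed.

Lemma tfun (I : finType) (X : eqType) (F : {ffun I -> X}) (G : I -> X) :
  (F == [ffun i => G i]) = [forall i, F i == G i].
Proof.
apply/eqP/forallP => [-> i|H]; first by rewrite ffunE.
by apply/ffunP => i; rewrite ffunE; apply/eqP/H.
Qed.

Lemma sat_if V (M : struc V) (lt : rel (dom M)) m (c : bool) (f : form V m) e :
  sat lt (if c then f else FFalse) e <-> c /\ sat lt f e.
Proof. by case: c => //=; split=> // -[]. Qed.

Definition uE (V : vocab) (T : eqType) m (p q : option T) (i j : 'I_m) : form V m :=
  match p, q with
  | None, None => FEq V i j
  | Some b, Some b' => cst V m (b == b')
  | _, _ => FFalse end.

Lemma qrank_uE V (T : eqType) m p q i j : qrank (@uE V T m p q i j) = 0.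
Proof. by case: p q => [?|] [?|] //=; rewrite qrank_cst. Qed.

Definition gUl V (B : struc V) (M : struc V) (p : option (dom B)) (x : dom M)
  : dom (dunion_struc M B) := match p with None => inl x | Some b => inr b end.

Definition uLl (V : vocab) (T : Type) (lB : rel T) m (p q : option T) (i j : 'I_m)
  : form V m :=
  match p, q with
  | None, None => FLt V i j
  | None, Some _ => cst V m true
  | Some _, None => cst V m false
  | Some b, Some b' => cst V m (lB b b') end.

Definition uRl V (B : struc V) m (s : vsym (union_vocab V)) :
  ('I_(@varity (union_vocab V) s) -> option (dom B) * 'I_m) -> form V m :=
  match s as s0 return ('I_(@varity (union_vocab V) s0) -> option (dom B) * 'I_m)
                       -> form V m with
  | inl s0 => fun t =>
      FOr (if [forall k, (t k).1 == None] then @FRel V m s0 (fun k => (t k).2) else FFalse)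
          (cst V m [exists u : {ffun 'I_(varity s0) -> dom B},
                      [forall k, (t k).1 == Some (u k)] && interp B s0 u])
  | inr true => fun t => cst V m ((t ord0).1 == None)
  | inr false => fun t => cst V m ((t ord0).1 != None)
  end.

Lemma union_left V (B : struc V) r (A1 A2 : struc V) :
  same_Th r A1 A2 -> same_Th r (dunion_struc A1 B) (dunion_struc A2 B).
Proof.
apply: (@transfer V (union_vocab V) (option (dom B)) None
  (fun M => dunion_struc M B) (@gUl V B)
  (fun M lt => sum_lt lt (@ord_lt (dom B)))
  (@uE V (dom B)) (@uLl V (dom B) (@ord_lt (dom B))) (@uRl V B)).
- move=> M [x|b]; first by exists None, x.
  by exists (Some b), (dom_pt M).
- move=> M lt Hl; apply: sum_lt_linear => //; exact: ord_lt_linear.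
- move=> M lt m [p|] [q|] i j e /=.
  + apply: iff_trans (@sat_cst _ _ _ _ _ _) _.
    by split=> [/eqP ->|[->]].
  + by split.
  + by split.
  + by split=> [->|[]].
- move=> M lt m [p|] [q|] i j e /=;
    try (apply: iff_trans (@sat_cst _ _ _ _ _ _) _); first [exact: iff_refl | by split => // _ [] | by split => // []].
- move=> M lt m [s0|[]] t e /=.
  + set t' := [ffun k => _].
    have HA : [exists u : {ffun 'I_(varity s0) -> dom M}, (t' == [ffun i => inl (u i)]) && interp M s0 u]
        = [forall k, (t k).1 == None] && interp M s0 [ffun k => e (t k).2].
      apply/existsP/andP.
      * case=> u /andP [Ht Hu]; rewrite tfun in Ht; move/forallP in Ht.
        have Hk : forall k, (t k).1 = None /\ e (t k).2 = u k.
          move=> k; move: (Ht k); rewrite /t' ffunE.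
          by case: (t k).1 => [b|] //= /eqP [->].
        split; first by apply/forallP => k; rewrite (Hk k).1.
        have -> // : [ffun k => e (t k).2] = u.
        by apply/ffunP => k; rewrite ffunE (Hk k).2.
      * case=> /forallP HN Hi; exists [ffun k => e (t k).2].
        rewrite Hi andbT tfun; apply/forallP => k; rewrite /t' !ffunE.
        by move/eqP: (HN k) => ->.
    have HB : [exists u : {ffun 'I_(varity s0) -> dom B}, (t' == [ffun i => inr (u i)]) && interp B s0 u]
        = [exists u : {ffun 'I_(varity s0) -> dom B},
             [forall k, (t k).1 == Some (u k)] && interp B s0 u].
      apply: eq_existsb => u; congr (_ && _); rewrite tfun.
      by apply: eq_forallb => k; rewrite /t' ffunE; case: (t k).1.
    split.
    * case=> [/sat_if [Hc Hr]|/sat_cst Hc]; apply/orP; [left|right].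
        by rewrite HA Hc.
      by rewrite HB.
    * case/orP => [|]; [rewrite HA => /andP [Hc Hr]; left; apply/sat_if|
                       rewrite HB => Hc; right; apply/sat_cst] => //.
  + apply: iff_trans (@sat_cst _ _ _ _ _ _) _; split.
    * move/eqP=> H0; apply/existsP; exists [ffun _ => e (t ord0).2].
      by rewrite tfun; apply/forallP => k; rewrite (ord1 k) !ffunE H0.
    * case/existsP=> u; rewrite tfun => /forallP /(_ ord0); rewrite !ffunE.
      by case: (t ord0).1.
  + apply: iff_trans (@sat_cst _ _ _ _ _ _) _; split.
    * case E: (t ord0).1 => [b|] // _; apply/existsP; exists [ffun _ => b].
      by rewrite tfun; apply/forallP => k; rewrite (ord1 k) !ffunE E.
    * case/existsP=> u; rewrite tfun => /forallP /(_ ord0); rewrite !ffunE.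
      by case: (t ord0).1.
- by move=> *; apply: qrank_uE.
- by move=> m [?|] [?|] *; rewrite /= ?qrank_cst.
- by move=> m [s0|[]] t /=; rewrite ?qrank_cst //; case: ifP.
Qed.

Definition gUr V (A : struc V) (M : struc V) (p : option (dom A)) (x : dom M)
  : dom (dunion_struc A M) := match p with None => inr x | Some a => inl a end.

Definition uLr (V : vocab) (T : Type) (lA : rel T) m (p q : option T) (i j : 'I_m)
  : form V m :=
  match p, q with
  | None, None => FLt V i j
  | None, Some _ => cst V m false
  | Some _, None => cst V m true
  | Some b, Some b' => cst V m (lA b b') end.

Definition uRr V (A : struc V) m (s : vsym (union_vocab V)) :
  ('I_(@varity (union_vocab V) s) -> option (dom A) * 'I_m) -> form V m :=
  match s as s0 return ('I_(@varity (union_vocab V) s0) -> option (dom A) * 'I_m)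
                       -> form V m with
  | inl s0 => fun t =>
      FOr (cst V m [exists u : {ffun 'I_(varity s0) -> dom A},
                      [forall k, (t k).1 == Some (u k)] && interp A s0 u])
          (if [forall k, (t k).1 == None] then @FRel V m s0 (fun k => (t k).2) else FFalse)
  | inr true => fun t => cst V m ((t ord0).1 != None)
  | inr false => fun t => cst V m ((t ord0).1 == None)
  end.

Lemma union_right V (A : struc V) r (B1 B2 : struc V) :
  same_Th r B1 B2 -> same_Th r (dunion_struc A B1) (dunion_struc A B2).
Proof.
apply: (@transfer V (union_vocab V) (option (dom A)) None
  (fun M => dunion_struc A M) (@gUr V A)
  (fun M lt => sum_lt (@ord_lt (dom A)) lt)
  (@uE V (dom A)) (@uLr V (dom A) (@ord_lt (dom A))) (@uRr V A)).
- move=> M [a|x]; last by exists None, x.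
  by exists (Some a), (dom_pt M).
- move=> M lt Hl; apply: sum_lt_linear => //; exact: ord_lt_linear.
- move=> M lt m [p|] [q|] i j e /=.
  + apply: iff_trans (@sat_cst _ _ _ _ _ _) _.
    by split=> [/eqP ->|[->]].
  + by split.
  + by split.
  + by split=> [->|[]].
- move=> M lt m [p|] [q|] i j e /=;
    try (apply: iff_trans (@sat_cst _ _ _ _ _ _) _);
    first [exact: iff_refl | by split => // _ [] | by split => // []].
- move=> M lt m [s0|[]] t e /=.
  + set t' := [ffun k => _].
    have HA : [exists u : {ffun 'I_(varity s0) -> dom M},
                 (t' == [ffun i => inr (u i)]) && interp M s0 u]
        = [forall k, (t k).1 == None] && interp M s0 [ffun k => e (t k).2].
      apply/existsP/andP.
      * case=> u /andP [Ht Hu]; rewrite tfun in Ht; move/forallP in Ht.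
        have Hk : forall k, (t k).1 = None /\ e (t k).2 = u k.
          move=> k; move: (Ht k); rewrite /t' ffunE.
          by case: (t k).1 => [b|] //= /eqP [->].
        split; first by apply/forallP => k; rewrite (Hk k).1.
        have -> // : [ffun k => e (t k).2] = u.
        by apply/ffunP => k; rewrite ffunE (Hk k).2.
      * case=> /forallP HN Hi; exists [ffun k => e (t k).2].
        rewrite Hi andbT tfun; apply/forallP => k; rewrite /t' !ffunE.
        by move/eqP: (HN k) => ->.
    have HB : [exists u : {ffun 'I_(varity s0) -> dom A},
                 (t' == [ffun i => inl (u i)]) && interp A s0 u]
        = [exists u : {ffun 'I_(varity s0) -> dom A},
             [forall k, (t k).1 == Some (u k)] && interp A s0 u].
      apply: eq_existsb => u; congr (_ && _); rewrite tfun.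
      by apply: eq_forallb => k; rewrite /t' ffunE; case: (t k).1.
    split.
    * case=> [/sat_cst Hc|/sat_if [Hc Hr]]; apply/orP; [left|right].
        by rewrite HB.
      by rewrite HA Hc.
    * case/orP => [|]; [rewrite HB => Hc; left; apply/sat_cst|
                       rewrite HA => /andP [Hc Hr]; right; apply/sat_if] => //.
  + apply: iff_trans (@sat_cst _ _ _ _ _ _) _; split.
    * case E: (t ord0).1 => [b|] // _; apply/existsP; exists [ffun _ => b].
      by rewrite tfun; apply/forallP => k; rewrite (ord1 k) !ffunE E.
    * case/existsP=> u; rewrite tfun => /forallP /(_ ord0); rewrite !ffunE.
      by case: (t ord0).1.
  + apply: iff_trans (@sat_cst _ _ _ _ _ _) _; split.
    * move/eqP=> H0; apply/existsP; exists [ffun _ => e (t ord0).2].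
      by rewrite tfun; apply/forallP => k; rewrite (ord1 k) !ffunE H0.
    * case/existsP=> u; rewrite tfun => /forallP /(_ ord0); rewrite !ffunE.
      by case: (t ord0).1.
- by move=> *; apply: qrank_uE.
- by move=> m [?|] [?|] *; rewrite /= ?qrank_cst.
- by move=> m [s0|[]] t /=; rewrite ?qrank_cst //; case: ifP.
Qed.

Lemma prod_left V (B : struc V) r (A1 A2 : struc V) :
  same_Th r A1 A2 -> same_Th r (prod_struc A1 B) (prod_struc A2 B).
Proof.
apply: (@transfer V V (dom B) (dom_pt B)
  (fun M => prod_struc M B) (fun M (b : dom B) (x : dom M) => ((x, b) : dom (prod_struc M B)))
  (fun M lt => lex lt (@ord_lt (dom B)))
  (fun m p q i j => FAnd (FEq V i j) (cst V m (p == q)))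
  (fun m p q i j => FOr (FLt V i j) (FAnd (FEq V i j) (cst V m (@ord_lt (dom B) p q))))
  (fun m s t => FAnd (@FRel V m s (fun k => (t k).2))
                     (cst V m (interp B s [ffun k => (t k).1])))).
- by move=> M [x b]; exists b, x.
- move=> M lt Hl; apply: lex_linear => //; exact: ord_lt_linear.
- move=> M lt m p q i j e /=; split.
  + by case=> -> /sat_cst /eqP ->.
  + by case=> -> ->; split => //; apply/sat_cst.
- move=> M lt m p q i j e /=; rewrite /lex /=; split.
  + case=> [H|[H /sat_cst Hc]]; first by rewrite H.
    by rewrite H eqxx Hc orbT.
  + case/orP => [H|/andP [/eqP H Hc]]; [left | right; split => //; apply/sat_cst].
    by [].
    by [].
- move=> M lt m s t e /=.
  set t' := [ffun k => (_, _)].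
  have E1 : [ffun i => (t' i).1] = [ffun k => e (t k).2]
    by apply/ffunP => k; rewrite !ffunE.
  have E2 : [ffun i => (t' i).2] = [ffun k => (t k).1]
    by apply/ffunP => k; rewrite !ffunE.
  rewrite E1 E2; split.
  + by case=> H /sat_cst Hc; rewrite H Hc.
  + by case/andP => H Hc; split => //; apply/sat_cst.
- by move=> *; rewrite /= !qrank_cst.
- by move=> *; rewrite /= !qrank_cst.
- by move=> *; rewrite /= !qrank_cst.
Qed.

Lemma prod_right V (A : struc V) r (B1 B2 : struc V) :
  same_Th r B1 B2 -> same_Th r (prod_struc A B1) (prod_struc A B2).
Proof.
apply: (@transfer V V (dom A) (dom_pt A)
  (fun M => prod_struc A M) (fun M (a : dom A) (x : dom M) => ((a, x) : dom (prod_struc A M)))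
  (fun M lt => lex (@ord_lt (dom A)) lt)
  (fun m p q i j => FAnd (cst V m (p == q)) (FEq V i j))
  (fun m p q i j => FOr (cst V m (@ord_lt (dom A) p q)) (FAnd (cst V m (p == q)) (FLt V i j)))
  (fun m s t => FAnd (cst V m (interp A s [ffun k => (t k).1]))
                     (@FRel V m s (fun k => (t k).2)))).
- by move=> M [a x]; exists a, x.
- move=> M lt Hl; apply: lex_linear => //; exact: ord_lt_linear.
- move=> M lt m p q i j e /=; split.
  + by case=> /sat_cst /eqP -> ->.
  + by case=> -> ->; split => //; apply/sat_cst.
- move=> M lt m p q i j e /=; rewrite /lex /=; split.
  + case=> [/sat_cst H|[/sat_cst /eqP H Hc]]; first by rewrite H.
    by rewrite H eqxx Hc orbT.
  + case/orP => [H|/andP [/eqP H Hc]]; [left; apply/sat_cst | right; split => //; apply/sat_cst].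
    by [].
    by rewrite H.
- move=> M lt m s t e /=.
  set t' := [ffun k => (_, _)].
  have E1 : [ffun i => (t' i).2] = [ffun k => e (t k).2]
    by apply/ffunP => k; rewrite !ffunE.
  have E2 : [ffun i => (t' i).1] = [ffun k => (t k).1]
    by apply/ffunP => k; rewrite !ffunE.
  rewrite E1 E2; split.
  + by case=> /sat_cst Hc H; rewrite H Hc.
  + by case/andP => Hc H; split => //; apply/sat_cst.
- by move=> *; rewrite /= !qrank_cst.
- by move=> *; rewrite /= !qrank_cst.
- by move=> *; rewrite /= !qrank_cst.
Qed.

Lemma same_Th_trans V k (M1 M2 M3 : struc V) :
  same_Th k M1 M2 -> same_Th k M2 M3 -> same_Th k M1 M3.
Proof. by move=> H1 H2 phi; apply: iff_trans (H1 phi) (H2 phi). Qed.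

Theorem theorem5p1 (k : nat) (V : vocab) (A1 A2 B1 B2 : struc V) :
  same_Th k A1 A2 -> same_Th k B1 B2 ->
  same_Th k (dunion_struc A1 B1) (dunion_struc A2 B2) /\
  same_Th k (prod_struc A1 B1) (prod_struc A2 B2).
Proof.
move=> HA HB; split.
- apply: same_Th_trans (union_left B1 HA) (union_right A2 HB).
- apply: same_Th_trans (prod_left B1 HA) (prod_right A2 HB).
Qed.
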